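(* If $n$ is a non-negative integer and $x$ is a complex number, then $$\sum_{k = 1}^n \sum_{j = 0}^{k - 1} \binom{n}{j} \frac{x^{n - j}}{k - j} = (1 + x)^n H_n - \sum_{k = 1}^n \frac{(1 + x)^{n - k}}{k}.$$ In particular, $$\sum_{k = 1}^n \sum_{j = 0}^{k - 1} \frac{\binom{n}{j}}{k - j} = 2^n \left(H_n - \sum_{k = 1}^n \frac{1}{2^k k} \right).$$
   Context: $H_n=\sum_{m=1}^n\frac1m$. Empty sums are zero. *)

(* Defs.v *)
From mathcomp Require Import all_boot all_order all_algebra.
From mathcomp Require Export complex.
From mathcomp Require Import reals.
Set Implicit Arguments. Unset Strict Implicit. Unset Printing Implicit Defensive.
Import Order.TTheory GRing.Theory Num.Theory.
Local Open Scope ring_scope.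

Definition harmonic (F : fieldType) (n : nat) : F :=
  \sum_(1 <= m < n.+1) (m%:R)^-1.

(* Main.v *)
Require Import Defs.
From mathcomp Require Import all_boot all_order all_algebra.
From mathcomp Require Import complex reals ring.
Import Order.TTheory GRing.Theory Num.Theory.
Local Open Scope ring_scope.

Section G.
Variable F : numFieldType.

Lemma harm0 : harmonic F 0 = 0.
Proof. by rewrite /harmonic big_geq. Qed.

Lemma harmS n : harmonic F n.+1 = harmonic F n + (n.+1%:R)^-1.
Proof. by rewrite /harmonic big_nat_recr. Qed.

Lemma tri (g : nat -> F) N :
  \sum_(1 <= k < N.+1) \sum_(0 <= j < k) g j / (k - j)%:R
  = \sum_(0 <= j < N.+1) g j * harmonic F (N - j).
Proof.
elim: N => [|N IH].
  by rewrite big_geq // big_nat1 subnn harm0 mulr0.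
rewrite big_nat_recr //= IH [RHS]big_nat_recr //= subnn harm0 mulr0 addr0.

rewrite -big_split /= big_nat_cond [RHS]big_nat_cond; apply: eq_bigr => j; rewrite andbT => /andP[_ hj].
by rewrite subSn // harmS mulrDr.
Qed.

Definition S n (x : F) := \sum_(m < n.+1) 'C(n, m)%:R * x ^+ m * harmonic F m.
Definition T n (x : F) := (1 + x) ^+ n * harmonic F n
      - \sum_(1 <= k < n.+1) (1 + x) ^+ (n - k) / k%:R.

Lemma auxsum n (x : F) :
  \sum_(m < n.+1) 'C(n, m)%:R * x ^+ m.+1 / (m.+1)%:R
  = ((1 + x) ^+ n.+1 - 1) / (n.+1)%:R.
Proof.
have -> : (1 + x) ^+ n.+1 - 1 = \sum_(i < n.+1) x ^+ i.+1 *+ 'C(n.+1, i.+1).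
  by rewrite [1 + x]addrC exprD1n big_ord_recl /= expr0 bin0 [_ *+ 1 + _]addrC addrK.
rewrite mulr_suml.
apply: eq_bigr => i _.
have h : (i.+1)%:R * 'C(n.+1, i.+1)%:R = (n.+1)%:R * 'C(n, i)%:R :> F.
  by rewrite -!natrM -mul_bin_diag.
have hi : (i.+1)%:R != 0 :> F by rewrite pnatr_eq0.
have hn : (n.+1)%:R != 0 :> F by rewrite pnatr_eq0.
have h' : 'C(n.+1, i.+1)%:R = (n.+1)%:R * 'C(n, i)%:R / (i.+1)%:R :> F.
  by rewrite -h mulrC mulKf.
rewrite -[x ^+ _ *+ _]mulr_natl h'; field; by rewrite !(addrC 1) !natr1 hi hn.
Qed.

Lemma Srec n (x : F) :
  S n.+1 x = (1 + x) * S n x + ((1 + x) ^+ n.+1 - 1) / (n.+1)%:R.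
Proof.
have E1 : S n.+1 x = \sum_(i < n.+1) 'C(n.+1, i.+1)%:R * x ^+ i.+1 * harmonic F i.+1.
  by rewrite /S big_ord_recl harm0 mulr0 add0r.
have E2 : S n x = \sum_(i < n.+1) 'C(n, i.+1)%:R * x ^+ i.+1 * harmonic F i.+1.
  rewrite /S big_ord_recl harm0 mulr0 add0r [RHS]big_ord_recr /= bin_small //.
  by rewrite mul0r mul0r addr0.
have E3 : \sum_(i < n.+1) 'C(n, i)%:R * x ^+ i.+1 * harmonic F i.+1
   = x * S n x + \sum_(m < n.+1) 'C(n, m)%:R * x ^+ m.+1 / (m.+1)%:R.
  rewrite /S mulr_sumr -big_split /=; apply: eq_bigr => i _.
  by rewrite harmS exprS; ring.
rewrite E1 -auxsum mulrDl mul1r -addrA -E3 E2 addrC -big_split /=.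
by apply: eq_bigr => i _; rewrite binS natrD !mulrDl addrC.
Qed.

Lemma Trec n (x : F) :
  T n.+1 x = (1 + x) * T n x + ((1 + x) ^+ n.+1 - 1) / (n.+1)%:R.
Proof.
rewrite /T harmS big_nat_recr //= subnn expr0.
have -> : \sum_(1 <= k < n.+1) (1 + x) ^+ (n.+1 - k) / k%:R
   = (1 + x) * \sum_(1 <= k < n.+1) (1 + x) ^+ (n - k) / k%:R.
  rewrite mulr_sumr big_nat_cond [RHS]big_nat_cond; apply: eq_bigr => k.
  by rewrite andbT => /andP[_ hk]; rewrite subSn // exprS mulrA.
rewrite exprS; ring.
Qed.

Lemma ST n (x : F) : S n x = T n x.
Proof.
elim: n => [|n IH]; first by rewrite /S /T big_ord1 harm0 big_geq // !mulr0 subr0.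
by rewrite Srec Trec IH.
Qed.

Lemma main n (x : F) :
  \sum_(1 <= k < n.+1) \sum_(0 <= j < k)
      'C(n, j)%:R * x ^+ (n - j) / (k - j)%:R = T n x.
Proof.
rewrite (tri (fun j => 'C(n, j)%:R * x ^+ (n - j))) -ST /S.
rewrite big_nat_rev big_mkord; apply: eq_bigr => i _.
have hi : (i <= n)%N by rewrite -ltnS.
by rewrite add0n subSS subKn // bin_sub.
Qed.
End G.

Local Open Scope complex_scope.

Theorem proposition15 (R : realType) (n : nat) (x : R[i]) :
  \sum_(1 <= k < n.+1) \sum_(0 <= j < k)
      'C(n, j)%:R * x ^+ (n - j) / (k - j)%:R
    = (1 + x) ^+ n * harmonic R[i] n
      - \sum_(1 <= k < n.+1) (1 + x) ^+ (n - k) / k%:R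
  /\
  \sum_(1 <= k < n.+1) \sum_(0 <= j < k) 'C(n, j)%:R / ((k - j)%:R : R)
    = 2 ^+ n * (harmonic R n - \sum_(1 <= k < n.+1) (2 ^+ k * k%:R)^-1).
Proof.
split; first exact: main.
have := @main R n 1; rewrite /T.
under eq_bigr do under eq_bigr do rewrite expr1n mulr1.
move=> ->; rewrite mulrBr; congr (_ - _); rewrite mulr_sumr.
rewrite big_nat_cond [RHS]big_nat_cond; apply: eq_bigr => k.
rewrite andbT => /andP[hk1 hk].
have hk0 : k%:R != 0 :> R by rewrite pnatr_eq0 -lt0n.
have h2 : 2 ^+ k != 0 :> R by rewrite expf_neq0 // pnatr_eq0.
rewrite -{2}(subnK (hk : (k <= n)%N)) exprD invfM.
field; exact/andP.
Qed.
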